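(* Consider the covariate-adaptive randomization design described in the context with $I=2$ covariates, each having 2 levels, and nonnegative weights $w_{o}, w_{m,1}, w_{m,2}, w_{s}$ summing to 1. Assume further that $w_{m,1}=w_{m,2}=:w_{m}$. Then the condition ''with $u_{1}=1$, $u_{2}=w_{o}+w_{m,1}$, $u_{3}=w_{o}+w_{m,2}$, $u_{4}=w_{o}$, the solution $\mathbf{x}=(x_1,x_2,x_3)$ of \[ \begin{pmatrix} u_{1} & u_{2} & u_{3}\\ u_{2} & u_{1} & u_{4}\\ u_{3} & u_{4} & u_{1}\end{pmatrix} \begin{pmatrix} x_{1}\\ x_{2}\\ x_{3}\end{pmatrix} =\begin{pmatrix} u_{4}\\ u_{3}\\ u_{2}\end{pmatrix} \] satisfies $|x_{1}|+|x_{2}|+|x_{3}|<1$'' is equivalent to \[ w_{m}<C(w_{o}):=\frac{\sqrt{(1-w_{o})^{2}+4(1+w_{o})^{2}}-1-3w_{o}}{4}. \] Hence, if in addition $w_s>0$, the chain $(\mathbf{D}_n)_{n\ge1}$ of within-stratum imbalances is a positive recurrent Markov chain with period 2 on $\mathbb{Z}^4$ whenever $w_m<C(w_o)$.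
   Context: Two treatments (1 and 2) are compared; patients arrive sequentially. There are $I$ covariates, covariate $i$ having $m_i$ levels; a stratum is a covariate profile $(k_1,\ldots,k_I)$ and a margin $(i;k_i)$ is the set of patients whose $i$th covariate is at level $k_i$. Covariate profiles are i.i.d. multinomial over strata. After $n-1$ patients, $D_{n-1}$, $D_{n-1}(i;k_i)$, $D_{n-1}(k_1,\ldots,k_I)$ are the differences (treatment 1 count minus treatment 2 count) overall, on margin $(i;k_i)$, and within stratum. For a new patient in stratum $(k_1^*,\ldots,k_I^* )$, $\mathit{Imb}_n^{(1)}=w_o[D_{n-1}+1]^2+\sum_i w_{m,i}[D_{n-1}(i;k_i^* )+1]^2+w_s[D_{n-1}(k_1^*,\ldots,k_I^* )+1]^2$ and $\mathit{Imb}_n^{(2)}$ is the same with $-1$ replacing $+1$; the patient is assigned to treatment 1 with probability $q$, $p$, or $1/2$ according as $\mathit{Imb}_n^{(1)}>$, $<$, or $=$ $\mathit{Imb}_n^{(2)}$, where $0<q<p<1$, $p+q=1$ (first patient: probability $1/2$). $\mathbf{D}_n$ is the array of within-stratum differences after $n$ patients. *)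

(* Defs.v *)
From HB Require Import structures.
From mathcomp Require Import all_boot all_order all_algebra.
From mathcomp Require Import all_classical all_reals all_analysis.
Set Implicit Arguments. Unset Strict Implicit. Unset Printing Implicit Defensive.
Import Order.TTheory GRing.Theory Num.Theory.
Local Open Scope ring_scope.
Local Open Scope classical_set_scope.
Import numFieldNormedType.Exports.

(* Strata for I = 2 covariates with 2 levels each: a profile (k1, k2). *)
Definition stratum := ('I_2 * 'I_2)%type.
(* A state of the chain D_n: the array of within-stratum differences (Z^4). *)
Definition state := {ffun stratum -> int}.

Definition Cbound (R : realType) (wo : R) : R :=
  (Num.sqrt ((1 - wo) ^+ 2 + 4 * (1 + wo) ^+ 2) - 1 - 3 * wo) / 4.

Section Chain.
Variables (R : realType) (wo wm1 wm2 ws p q : R) (pi : stratum -> R).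

Definition Dall (d : state) : int := \sum_(t : stratum) d t.
Definition Dm1 (d : state) (k : 'I_2) : int := \sum_(t : stratum | t.1 == k) d t.
Definition Dm2 (d : state) (k : 'I_2) : int := \sum_(t : stratum | t.2 == k) d t.

(* Imb_n^{(1)} (e = 1) and Imb_n^{(2)} (e = -1) for a new patient in stratum s
   when the current within-stratum difference array is d. *)
Definition imb (d : state) (s : stratum) (e : int) : R :=
  wo * ((Dall d + e)%:~R) ^+ 2
  + wm1 * ((Dm1 d s.1 + e)%:~R) ^+ 2
  + wm2 * ((Dm2 d s.2 + e)%:~R) ^+ 2
  + ws * ((d s + e)%:~R) ^+ 2.

Definition prob1 (d : state) (s : stratum) : R :=
  if imb d s (-1) < imb d s 1 then q
  else if imb d s 1 < imb d s (-1) then p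
  else 1 / 2.

(* next state: treatment 1 (b = true) adds 1 in stratum s, treatment 2 subtracts 1 *)
Definition next (d : state) (s : stratum) (b : bool) : state :=
  [ffun t => d t + (if t == s then (if b then 1 else -1) else 0)].

Definition pstep (d : state) (s : stratum) (b : bool) : R :=
  pi s * (if b then prob1 d s else 1 - prob1 d s).

Fixpoint nstep (n : nat) (x y : state) : R :=
  match n with
  | 0%N => (x == y)%:R
  | n'.+1 => \sum_(s : stratum) \sum_(b : bool) pstep x s b * nstep n' (next x s b) y
  end.

(* probability that, starting from d, the first visit to z happens at time n *)
Fixpoint hit (z : state) (n : nat) (d : state) : R :=
  match n with
  | 0%N => (d == z)%:R
  | n'.+1 => if d == z then 0
             else \sum_(s : stratum) \sum_(b : bool) pstep d s b * hit z n' (next d s b)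
  end.

Definition firstret (z : state) (n : nat) : R :=
  match n with
  | 0%N => 0
  | n'.+1 => \sum_(s : stratum) \sum_(b : bool) pstep z s b * hit z n' (next z s b)
  end.

Definition irreducible : Prop :=
  forall x y : state, exists n, 0 < nstep n x y.

(* z is positive recurrent: returns a.s., with finite mean return time *)
Definition pos_recurrent (z : state) : Prop :=
  series (firstret z) @ \oo --> (1 : R) /\
  cvg (series (fun n => n%:R * firstret z n) @ \oo).

Definition period_is (k : nat) (z : state) : Prop :=
  (forall n, (0 < n)%N -> 0 < nstep n z z -> (k %| n)%N) /\
  (forall k', (forall n, (0 < n)%N -> 0 < nstep n z z -> (k' %| n)%N) -> (k' %| k)%N).

Definition pos_rec_chain_period (k : nat) : Prop :=
  irreducible /\ (forall z, pos_recurrent z) /\ (forall z, period_is k z).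

End Chain.

(* Main.v *)
Require Import Defs.
From HB Require Import structures.
From mathcomp Require Import all_boot all_order all_algebra.
From mathcomp Require Import all_classical all_reals all_analysis.
From mathcomp Require Import ring lra zify.
Import Order.TTheory GRing.Theory Num.Theory.
Local Open Scope ring_scope.
Local Open Scope classical_set_scope.
Import numFieldNormedType.Exports.
Notation nxt := Defs.next.

Lemma absz_tri (a b : int) : (`|(a - b)%R| <= `|a| + `|b|)%N.
Proof. lia. Qed.

Definition nrm (d : state) : nat := (\sum_(t : stratum) `|d t|)%N.
Definition dst (x y : state) : nat := (\sum_(t : stratum) `|(x t - y t)%R|)%N.

Definition sgn (b : bool) : int := if b then 1 else -1.

Lemma nextE (d : state) (s : stratum) (b : bool) (t : stratum) : nxt d s b t = d t + (if t == s then sgn b else 0).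
Proof. by rewrite /nxt ffunE. Qed.

Lemma nrm_next (d : state) (s : stratum) (b : bool) : (nrm (nxt d s b) <= (nrm d).+1)%N.
Proof.
rewrite /nrm (bigD1 s) //= [X in (_ <= X.+1)%N](bigD1 s) //= nextE eqxx.
rewrite -addSn leq_add //.
  by rewrite /sgn; move: (d s) => a; case: b => /=; lia.
apply: leq_sum => t /negbTE ts; rewrite nextE ts addr0 //.
Qed.

Lemma dst_tri (d z : state) : (dst d z <= nrm d + nrm z)%N.
Proof.
rewrite /dst /nrm -big_split /=; apply: leq_sum => t _; exact: absz_tri.
Qed.

Lemma dst0 (d z : state) : dst d z = 0%N -> d = z.
Proof.
move=> h; apply/ffunP => t.
have : (`|(d t - z t)%R| <= dst d z)%N.
  by rewrite /dst (bigD1 t) //= leq_addr.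
rewrite h leqn0 => /eqP; move: (d t) (z t) => a c; lia.
Qed.

Lemma dst_move (d y : state) : d != y -> exists s b,
  dst (nxt d s b) y = (dst d y).-1 /\ (d s < y s -> b = true) /\ (y s < d s -> b = false) /\ d s != y s.
Proof.
move=> ne.
have [s hs] : exists s, d s != y s.
  apply/existsP; apply: contraR ne => /existsPn h; apply/eqP/ffunP => t.
  by move: (h t); rewrite negbK => /eqP.
exists s, (d s < y s); split; last first.
  split; first by move=> ->. split=> //. move=> h; apply/negbTE; rewrite -leNgt ltW //.
rewrite /dst (bigD1 s) //= [X in _ = X.-1](bigD1 s) //= nextE eqxx.
have -> : (\sum_(i | i != s) `|(nxt d s (d s < y s) i - y i)%R| =
          \sum_(i | i != s) `|(d i - y i)%R|)%N.
  by apply: eq_bigr => t /negbTE ts; rewrite nextE ts addr0.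
move: hs; rewrite /sgn; move: (d s) (y s) (\sum_(i | i != s) `|(d i - y i)%R|)%N => a c S; case: ltP => /= h hs; lia.
Qed.


Fixpoint Kp {R : realType} (ps : state -> stratum -> bool -> R) (z : state)
   (n : nat) (f : state -> R) (d : state) : R :=
  match n with
  | 0%N => f d
  | n'.+1 => if d == z then 0 else
      \sum_(s : stratum) \sum_(b : bool) ps d s b * Kp ps z n' f (nxt d s b)
  end.

Fixpoint U {R : realType} (ps : state -> stratum -> bool -> R) (z : state)
   (n : nat) (d : state) : R :=
  match n with
  | 0%N => 0
  | n'.+1 => 1 + if d == z then 0 else
      \sum_(s : stratum) \sum_(b : bool) ps d s b * U ps z n' (nxt d s b)
  end.

Fixpoint hitg {R : realType} (ps : state -> stratum -> bool -> R) (z : state)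
   (n : nat) (d : state) : R :=
  match n with
  | 0%N => (d == z)%:R
  | n'.+1 => if d == z then 0
             else \sum_(s : stratum) \sum_(b : bool) ps d s b * hitg ps z n' (nxt d s b)
  end.

Fixpoint nstepg {R : realType} (ps : state -> stratum -> bool -> R)
   (n : nat) (x y : state) : R :=
  match n with
  | 0%N => (x == y)%:R
  | n'.+1 => \sum_(s : stratum) \sum_(b : bool) ps x s b * nstepg ps n' (nxt x s b) y
  end.

Definition one_ {R : realType} : state -> R := fun _ => 1.

Lemma sum_le (R : realType) (ps : state -> stratum -> bool -> R) d (F G : stratum -> bool -> R) :
  (forall s b, 0 <= ps d s b) -> (forall s b, F s b <= G s b) ->
  \sum_s \sum_b ps d s b * F s b <= \sum_s \sum_b ps d s b * G s b.
Proof.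
move=> h0 h; apply: ler_sum => s _; apply: ler_sum => b _; exact: ler_wpM2l.
Qed.

Lemma sum_ge0 (R : realType) (ps : state -> stratum -> bool -> R) d (F : stratum -> bool -> R) :
  (forall s b, 0 <= ps d s b) -> (forall s b, 0 <= F s b) ->
  0 <= \sum_s \sum_b ps d s b * F s b.
Proof.
move=> h0 h; apply: sumr_ge0 => s _; apply: sumr_ge0 => b _; exact: mulr_ge0.
Qed.

Lemma sum_const (R : realType) (ps : state -> stratum -> bool -> R) d (c : R) :
  (\sum_s \sum_b ps d s b = 1) -> \sum_s \sum_b ps d s b * c = c.
Proof.
move=> h; rewrite -[RHS]mul1r -h mulr_suml; apply: eq_bigr => s _; by rewrite mulr_suml.
Qed.

Lemma sum_lin (R : realType) (ps : state -> stratum -> bool -> R) d (F G : stratum -> bool -> R) c :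
  \sum_s \sum_b ps d s b * (F s b + c * G s b) =
  \sum_s \sum_b ps d s b * F s b + c * \sum_s \sum_b ps d s b * G s b.
Proof.
rewrite mulr_sumr -big_split; apply: eq_bigr => s _.
rewrite mulr_sumr -big_split; apply: eq_bigr => b _ /=; ring.
Qed.

Definition PS0 {R : realType} (ps : state -> stratum -> bool -> R) :=
  forall d s b, 0 <= ps d s b.
Definition PS1 {R : realType} (ps : state -> stratum -> bool -> R) :=
  forall d, \sum_s \sum_b ps d s b = 1.

Lemma Kp_le (R : realType) (ps : state -> stratum -> bool -> R) z :
  PS0 ps -> PS1 ps -> forall n f d (B : R), 0 <= B ->
  (forall x, (nrm x <= nrm d + n)%N -> f x <= B) -> Kp ps z n f d <= B.
Proof.
move=> h0 h1; elim=> [|n IH] f d B hB hf /=.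
  by apply: hf; rewrite addn0.
case: eqP => // _.
rewrite -[X in _ <= X](@sum_const R ps d _ (h1 d)).
apply: sum_le => // s b; apply: IH => // x hx; apply: hf.
apply: (leq_trans hx); rewrite addnS -addSn leq_add2r; exact: nrm_next.
Qed.

Lemma Kp_ge0 (R : realType) (ps : state -> stratum -> bool -> R) z :
  PS0 ps -> forall n f d, (forall x, 0 <= f x) -> 0 <= Kp ps z n f d.
Proof.
move=> h0; elim=> [|n IH] f d hf /=; first exact: hf.
case: eqP => // _; apply: sum_ge0 => // s b; exact: IH.
Qed.

Lemma Kp_mono (R : realType) (ps : state -> stratum -> bool -> R) z :
  PS0 ps -> forall n f g d, (forall x, f x <= g x) -> Kp ps z n f d <= Kp ps z n g d.
Proof.
move=> h0; elim=> [|n IH] f g d hf /=; first exact: hf.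
case: eqP => // _; apply: sum_le => // s b; exact: IH.
Qed.

Lemma Kp_lin (R : realType) (ps : state -> stratum -> bool -> R) z :
  forall n f g (c : R) d, Kp ps z n (fun x => f x + c * g x) d = Kp ps z n f d + c * Kp ps z n g d.
Proof.
elim=> [|n IH] f g c d //=.
case: eqP => _; first by rewrite mulr0 addr0.
rewrite -sum_lin; apply: eq_bigr => s _; apply: eq_bigr => b _; by rewrite IH.
Qed.

Lemma U_ge0 (R : realType) (ps : state -> stratum -> bool -> R) z :
  PS0 ps -> forall M d, 0 <= U ps z M d.
Proof.
move=> h0; elim=> [|M IH] d //=.
case: eqP => _; first lra.
have := @sum_ge0 R ps d (fun s b => U ps z M (nxt d s b)) (h0 d) (fun s b => IH _); lra.
Qed.

Lemma U_le (R : realType) (ps : state -> stratum -> bool -> R) z :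
  PS0 ps -> PS1 ps -> forall M d, U ps z M d <= M%:R.
Proof.
move=> h0 h1; elim=> [|M IH] d //=.
rewrite -(addn1 M) natrD addrC; apply: lerD => //.
case: eqP => _ //.
rewrite -[X in _ <= X](@sum_const R ps d _ (h1 d)).
apply: sum_le => // s b; exact: IH.
Qed.

Lemma U_add (R : realType) (ps : state -> stratum -> bool -> R) z :
  forall L m d, U ps z (L + m) d = U ps z L d + Kp ps z L (U ps z m) d.
Proof.
elim=> [|L IH] m d /=; first by rewrite add0r.
case: eqP => _; first by rewrite !addr0.
rewrite -addrA; congr (_ + _).
rewrite -big_split; apply: eq_bigr => s _; rewrite -big_split; apply: eq_bigr => b _ /=.
by rewrite IH mulrDr.
Qed.

Lemma U_sum (R : realType) (ps : state -> stratum -> bool -> R) z :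
  forall M d, U ps z M d = \sum_(N < M) Kp ps z N one_ d.
Proof.
elim=> [|M IH] d /=; first by rewrite big_ord0.
rewrite big_ord_recl /=; congr (_ + _).
case: eqP => _.
  by rewrite big1 // => i _.
rewrite (eq_bigr (fun s => \sum_(b : bool) \sum_(N < M) ps d s b * Kp ps z N one_ (nxt d s b))).
  rewrite (eq_bigr (fun s => \sum_(N<M) \sum_b ps d s b * Kp ps z N one_ (nxt d s b))); last first.
    by move=> s _; rewrite exchange_big.
  rewrite exchange_big /=; apply: eq_bigr => i _; by rewrite add0n.
move=> s _; apply: eq_bigr => b _; by rewrite IH mulr_sumr.
Qed.

Lemma Kp_decr (R : realType) (ps : state -> stratum -> bool -> R) z :
  PS0 ps -> PS1 ps -> forall N d, Kp ps z N.+1 one_ d <= Kp ps z N one_ d.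
Proof.
move=> h0 h1; elim=> [|N IH] d.
  apply: Kp_le => //; lra.
rewrite [Kp _ _ N.+2 _ _]/= [Kp _ _ N.+1 _ _]/=.
case: eqP => // _; apply: sum_le => // s b; exact: IH.
Qed.

Lemma hit_sum (R : realType) (ps : state -> stratum -> bool -> R) z :
  PS1 ps -> forall M d, \sum_(k < M) hitg ps z k d = 1 - Kp ps z M one_ d.
Proof.
move=> h1; elim=> [|M IH] d; first by rewrite big_ord0 /one_ /= subrr.
rewrite big_ord_recl /=.
case: (eqVneq d z) => [_|ne]; first by rewrite big1 ?addr0 // subr0.
rewrite add0r.
rewrite (eq_bigr (fun i : 'I_M => \sum_s \sum_b ps d s b * hitg ps z i (nxt d s b))) //.
rewrite exchange_big /=.
rewrite (eq_bigr (fun s => \sum_b ps d s b * (1 - Kp ps z M one_ (nxt d s b)))).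
  rewrite -[X in X - _](h1 d) -sumrB; apply: eq_bigr => s _.
  rewrite -sumrB; apply: eq_bigr => b _; ring.
move=> s _; rewrite exchange_big /=; apply: eq_bigr => b _.
by rewrite -IH mulr_sumr.
Qed.

Lemma single_le (R : realType) (F : stratum -> bool -> R) s0 b0 :
  (forall s b, 0 <= F s b) -> F s0 b0 <= \sum_s \sum_b F s b.
Proof.
move=> h; rewrite (bigD1 s0) //= (bigD1 b0) //= -addrA lerDl.
apply: addr_ge0; first by apply: sumr_ge0.
by apply: sumr_ge0 => s _; apply: sumr_ge0.
Qed.

Lemma hit_T (R : realType) (ps : state -> stratum -> bool -> R) z :
  PS0 ps -> PS1 ps -> forall M d,
  \sum_(k < M) (k.+1)%:R * hitg ps z k d <= U ps z M d.
Proof.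
move=> h0 h1; elim=> [|M IH] d; first by rewrite big_ord0.
rewrite big_ord_recl /=.
case: (eqVneq d z) => [_|ne].
  by rewrite big1 ?addr0 ?mulr1 //= => i _; rewrite mulr0.
rewrite mulr0 add0r.
rewrite (eq_bigr (fun i : 'I_M => \sum_s \sum_b ps d s b * ((i.+2)%:R * hitg ps z i (nxt d s b)))); last first.
  move=> i _; rewrite mulr_sumr; apply: eq_bigr => s _; rewrite mulr_sumr; apply: eq_bigr => b _.
  by rewrite mulrCA.
rewrite exchange_big /=.
rewrite (eq_bigr (fun s => \sum_b ps d s b * \sum_(i < M) (i.+2)%:R * hitg ps z i (nxt d s b))); last first.
  move=> s _; rewrite exchange_big /=; apply: eq_bigr => b _; by rewrite mulr_sumr.
have -> : 1 + \sum_s \sum_b ps d s b * U ps z M (nxt d s b) =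
          \sum_s \sum_b ps d s b * (U ps z M (nxt d s b) + 1 * 1).
  by rewrite sum_lin (@sum_const R ps d 1 (h1 d)) mulr1 addrC.
apply: sum_le => // s b.
have -> : \sum_(i < M) (i.+2)%:R * hitg ps z i (nxt d s b) =
   \sum_(i < M) (i.+1)%:R * hitg ps z i (nxt d s b) + \sum_(i < M) hitg ps z i (nxt d s b).
  rewrite -big_split; apply: eq_bigr => i _ /=; rewrite -(addn1 i.+1) natrD; ring.
rewrite mulr1; apply: lerD; first exact: IH.
rewrite hit_sum //; have := @Kp_ge0 R ps z h0 M one_ (nxt d s b) (fun _ => ler01); lra.
Qed.

Lemma Kp_dist (R : realType) (ps : state -> stratum -> bool -> R) z (c : R) :
  PS0 ps -> PS1 ps -> 0 <= c -> (forall d s b, c <= ps d s b) ->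
  forall k d n, dst d z = k -> (k < n)%N -> Kp ps z n one_ d <= 1 - c ^+ k.
Proof.
move=> h0 h1 hc hC; elim=> [|k IH] d n hk hn.
  move/dst0: hk => ->; case: n hn => // n _ /=; rewrite eqxx expr0; lra.
case: n hn => // n hn.
have ne : d != z by apply/eqP => e; move: hk; rewrite e /dst big1 // => t _; rewrite subrr.
have [s0 [b0 [hd _]]] := dst_move _ _ ne.
rewrite /= (negbTE ne).
have hK : forall s b, Kp ps z n one_ (nxt d s b) <= 1.
  by move=> s b; apply: Kp_le => //; lra.
have e : \sum_s \sum_b ps d s b * Kp ps z n one_ (nxt d s b) =
    1 - \sum_s \sum_b ps d s b * (1 - Kp ps z n one_ (nxt d s b)).
  have -> : \sum_s \sum_b ps d s b * (1 - Kp ps z n one_ (nxt d s b)) =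
     \sum_s \sum_b ps d s b - \sum_s \sum_b ps d s b * Kp ps z n one_ (nxt d s b).
    rewrite -sumrB; apply: eq_bigr => s _; rewrite -sumrB; apply: eq_bigr => b _; ring.
  rewrite h1; ring.
rewrite e.
have h2 : c * c ^+ k <= ps d s0 b0 * (1 - Kp ps z n one_ (nxt d s0 b0)).
  apply: ler_pM => //; first exact: exprn_ge0.
  have := IH (nxt d s0 b0) n; rewrite hd hk /= => /(_ erefl hn); lra.
have h3 := @single_le R (fun s b => ps d s b * (1 - Kp ps z n one_ (nxt d s b))) s0 b0.
have h4 : forall s b, 0 <= ps d s b * (1 - Kp ps z n one_ (nxt d s b)).
  by move=> s b; apply: mulr_ge0 => //; have := hK s b; lra.
have := h3 h4; rewrite exprS; lra.
Qed.

Lemma nstep_ge0 (R : realType) (ps : state -> stratum -> bool -> R) :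
  PS0 ps -> forall n x y, 0 <= nstepg ps n x y.
Proof.
move=> h0; elim=> [|n IH] x y /=; first by case: (x == y).
apply: sum_ge0 => // s b; exact: IH.
Qed.

Lemma nstep_dist (R : realType) (ps : state -> stratum -> bool -> R) (c : R) :
  PS0 ps -> 0 <= c -> (forall d s b, c <= ps d s b) ->
  forall k x y, dst x y = k -> c ^+ k <= nstepg ps k x y.
Proof.
move=> h0 hc hC; elim=> [|k IH] x y hk.
  by move/dst0: hk => ->; rewrite /= eqxx expr0.
have ne : x != y by apply/eqP => e; move: hk; rewrite e /dst big1 // => t _; rewrite subrr.
have [s0 [b0 [hd _]]] := dst_move _ _ ne.
rewrite /=.
have h2 : c * c ^+ k <= ps x s0 b0 * nstepg ps k (nxt x s0 b0) y.
  apply: ler_pM => //; first exact: exprn_ge0.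
  by apply: IH; rewrite hd hk.
have := @single_le R (fun s b => ps x s b * nstepg ps k (nxt x s b) y) s0 b0.
rewrite exprS => h; apply: (le_trans h2); apply: h => s b.
apply: mulr_ge0 => //; exact: nstep_ge0.
Qed.

Lemma Dall_next (d : state) s b : Dall (nxt d s b) = Dall d + sgn b.
Proof.
rewrite /Dall (bigD1 s) //= [in RHS](bigD1 s) //= nextE eqxx.
have -> : \sum_(i | i != s) nxt d s b i = \sum_(i | i != s) d i.
  by apply: eq_bigr => t /negbTE ts; rewrite nextE ts addr0.
ring.
Qed.

Lemma nstep_parity (R : realType) (ps : state -> stratum -> bool -> R) :
  PS0 ps -> forall n x y, 0 < nstepg ps n x y ->
  exists k : int, Dall x - Dall y + n%:Z = 2 * k.
Proof.
move=> h0; elim=> [|n IH] x y /=.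
  case: (eqVneq x y) => [->|]; last by rewrite ltxx.
  by move=> _; exists 0; rewrite subrr.
case: (boolP [exists s, [exists b, 0 < nstepg ps n (nxt x s b) y]]).
  move=> /existsP[s /existsP[b /IH [k hk]]] _.
  rewrite Dall_next /sgn in hk.
  case: b hk => /= hk; [exists k | exists (k + 1)]; move: hk; lia.
move=> /existsPn hn; rewrite big1 ?ltxx // => s _; rewrite big1 // => b _.
have := hn s; move/existsPn/(_ b); rewrite -leNgt => h.
have : nstepg ps n (nxt x s b) y = 0.
  by apply/eqP; rewrite eq_le h nstep_ge0.
by move=> ->; rewrite mulr0.
Qed.

Lemma c_le1 (R : realType) (ps : state -> stratum -> bool -> R) (c : R) (d : state) s b :
  PS0 ps -> PS1 ps -> c <= ps d s b -> c <= 1.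
Proof.
move=> h0 h1 hc; apply: (le_trans hc); rewrite -(h1 d).
exact: (@single_le R (ps d) s b (h0 d)).
Qed.

Lemma U_bound (R : realType) (ps : state -> stratum -> bool -> R) z (c : R) (V : state -> R) (Rn : nat) :
  PS0 ps -> PS1 ps -> 0 < c -> (forall d s b, c <= ps d s b) ->
  (forall x, 0 <= V x) -> (forall x, V x <= ((nrm x)%:R) ^+ 2) ->
  (forall d, (Rn <= nrm d)%N -> \sum_s \sum_b ps d s b * V (nxt d s b) <= V d - 1) ->
  exists A : R, forall M d, U ps z M d <= V d + A.
Proof.
move=> h0 h1 hc hC hV0 hVn hdr.
have c1 : c <= 1 by apply: (@c_le1 R ps c z (0,0) true) => //; exact: hC.
set L := (Rn + nrm z)%N.
set C : R := ((Rn + L)%:R) ^+ 2.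
set del : R := c ^+ L.
have hdel : 0 < del by rewrite /del exprn_gt0.
have hdel1 : del <= 1 by rewrite /del exprn_ile1 // ltW.
have hC0 : 0 <= C by rewrite /C sqr_ge0.
set A : R := (L%:R + C + 1) / del.
have hAd : A * del = L%:R + C + 1 by rewrite /A divfK // gt_eqF.
have hL0 : (0 : R) <= L%:R by [].
have hA : L%:R + C + 1 <= A.
  have : 0 <= A by rewrite /A divr_ge0 // ?ltW //; lra.
  move=> A0; rewrite -hAd; have : A * del <= A * 1 by rewrite ler_wpM2l.
  lra.
exists A => M; elim/ltn_ind: M => M IH d.
case: M IH => [|M] IH.
  rewrite /=; have := hV0 d; lra.
case: (eqVneq d z) => [->|ne].
  rewrite /= eqxx addr0; have := hV0 z; lra.
case: (leqP Rn (nrm d)) => hRn.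
  rewrite /= (negbTE ne).
  have h1' : \sum_s \sum_b ps d s b * U ps z M (nxt d s b) <=
        \sum_s \sum_b ps d s b * (V (nxt d s b) + A * 1).
    by apply: sum_le => // s b; rewrite mulr1; apply: IH.
  rewrite sum_lin (@sum_const R ps d 1 (h1 d)) mulr1 in h1'.
  have := hdr d hRn; lra.
case: (ltnP M.+1 L) => hML.
  have := @U_le R ps z h0 h1 M.+1 d.
  have : (M.+1%:R : R) <= L%:R by rewrite ler_nat ltnW.
  have := hV0 d; lra.
have [m hm] : exists m, M.+1 = (L + m)%N by exists (M.+1 - L)%N; rewrite subnKC.
have mlt : (m < M.+1)%N by move: hm hRn; rewrite /L; lia.
rewrite hm U_add.
have e1 := @U_le R ps z h0 h1 L d.
have e2 : Kp ps z L (U ps z m) d <= Kp ps z L (fun x => V x + A * one_ x) d.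
  apply: Kp_mono => // x; rewrite /one_ mulr1; exact: IH.
rewrite Kp_lin in e2.
have e3 : Kp ps z L V d <= C.
  apply: Kp_le => // x hx; apply: (le_trans (hVn x)).
  rewrite /C ler_pXn2r ?nnegrE // ler_nat.
  by apply: (leq_trans hx); rewrite leq_add2r ltnW.
have e4 : Kp ps z L one_ d <= 1 - del.
  have hdst : (dst d z < L)%N.
    by apply: (leq_ltn_trans (dst_tri d z)); rewrite /L ltn_add2r.
  apply: (le_trans (@Kp_dist R ps z c h0 h1 (ltW hc) hC _ d L erefl hdst)).
  rewrite lerD2l lerN2 /del; apply: ler_wiXn2l => //; [exact: ltW | exact: ltnW].
have A0 : 0 <= A by lra.
have e5 : A * Kp ps z L one_ d <= A * (1 - del) by rewrite ler_wpM2l.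
have := hV0 d; lra.
Qed.

Definition firstretg {R : realType} (ps : state -> stratum -> bool -> R) z (n : nat) : R :=
  match n with
  | 0%N => 0
  | n'.+1 => \sum_s \sum_b ps z s b * hitg ps z n' (nxt z s b)
  end.

Lemma hitg_ge0 (R : realType) (ps : state -> stratum -> bool -> R) z :
  PS0 ps -> forall n d, 0 <= hitg ps z n d.
Proof.
move=> h0; elim=> [|n IH] d /=; first by case: (d == z).
case: (d == z) => //; apply: sum_ge0 => // s b; exact: IH.
Qed.

Lemma Kp_decr_le (R : realType) (ps : state -> stratum -> bool -> R) z :
  PS0 ps -> PS1 ps -> forall N M d, (N <= M)%N -> Kp ps z M one_ d <= Kp ps z N one_ d.
Proof.
move=> h0 h1 N; elim=> [|M IH] d hNM.
  by move: hNM; rewrite leqn0 => /eqP ->.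
case: (ltngtP N M.+1) hNM => // [hlt|->] _; last by [].
apply: (le_trans (@Kp_decr R ps z h0 h1 M d)); apply: IH; by rewrite -ltnS.
Qed.

Lemma r_harm (R : realType) (ps : state -> stratum -> bool -> R) z (Bf : state -> R) :
  PS0 ps -> PS1 ps -> (forall M d, U ps z M d <= Bf d) ->
  forall M d, Kp ps z M one_ d <= Bf d * (M.+1%:R)^-1.
Proof.
move=> h0 h1 hB M d.
rewrite ler_pdivlMr // mulrC.
apply: (le_trans _ (hB M.+1 d)); rewrite U_sum.
have -> : M.+1%:R * Kp ps z M one_ d = \sum_(N < M.+1) Kp ps z M one_ d.
  by rewrite sumr_const card_ord mulr_natl.
apply: ler_sum => N _; apply: Kp_decr_le => //; rewrite -ltnS; exact: ltn_ord.
Qed.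

Lemma cvg0_harm (R : realType) (u : R ^nat) (K : R) :
  (forall n, 0 <= u n <= K * (n.+1%:R)^-1) -> u @ \oo --> 0.
Proof.
move=> h.
have c0 : (fun _ : nat => (0:R)) @ \oo --> (0:R) by exact: cvg_cst.
have c1 : (fun n : nat => K * (n.+1%:R)^-1) @ \oo --> (0:R).
  have := @cvgMl_tmp _ _ _ _ (@harmonic R) K 0 cvg_harmonic.
  by rewrite mulr0 => H; exact: H.
apply: (squeeze_cvgr _ c0 c1).
by apply: nearW => n /=; apply: h.
Qed.

Lemma pr_gen (R : realType) (ps : state -> stratum -> bool -> R) z (Bf : state -> R) :
  PS0 ps -> PS1 ps -> (forall M d, U ps z M d <= Bf d) ->
  series (firstretg ps z) @ \oo --> (1 : R) /\
  cvg (series (fun n => n%:R * firstretg ps z n) @ \oo).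
Proof.
move=> h0 h1 hB.
have hB0 : forall d, 0 <= Bf d by move=> d; exact: (hB 0%N d).
set K := \sum_s \sum_b ps z s b * Bf (nxt z s b).
have hK : 0 <= K by apply: sum_ge0.
split.
  rewrite -cvg_shiftS.
  set w := fun n => \sum_s \sum_b ps z s b * Kp ps z n one_ (nxt z s b).
  have -> : [sequence series (firstretg ps z) n.+1]_n = (fun n => 1 - w n).
    apply/funext => n /=; rewrite /series /= big_mkord big_ord_recl /= add0r.
    rewrite (eq_bigr (fun i : 'I_n => \sum_s \sum_b ps z s b * hitg ps z i (nxt z s b))) //.
    rewrite exchange_big /=.
    rewrite (eq_bigr (fun s => \sum_b ps z s b * (1 - Kp ps z n one_ (nxt z s b)))).
      rewrite -[X in X - _](h1 z) /w -sumrB; apply: eq_bigr => s _.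
      rewrite -sumrB; apply: eq_bigr => b _; ring.
    move=> s _; rewrite exchange_big /=; apply: eq_bigr => b _.
    by rewrite -hit_sum // mulr_sumr.
  have hw : w @ \oo --> 0.
    apply: (@cvg0_harm R w K) => n; apply/andP; split.
      apply: sum_ge0 => // s b; apply: Kp_ge0 => // x; exact: ler01.
    rewrite /K mulr_suml; apply: ler_sum => s _; rewrite mulr_suml; apply: ler_sum => b _.
    rewrite -mulrA; apply: ler_wpM2l => //; exact: r_harm.
  have c0 : (fun _ : nat => (1:R)) @ \oo --> (1:R) by exact: cvg_cst.
  have := cvgB c0 hw.
  by rewrite subr0 => H; exact: H.
apply: nondecreasing_is_cvgn.
  apply: nondecreasing_series => n _ _; case: n => [|n]; first by rewrite mul0r.
  apply: mulr_ge0 => //; apply: sum_ge0 => // s b; exact: hitg_ge0.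
exists K => _ [M _ <-].
case: M => [|M]; first by rewrite /series /= big_geq.
rewrite /series /= big_mkord big_ord_recl /= mul0r add0r.
rewrite (eq_bigr (fun i : 'I_M => \sum_s \sum_b ps z s b * ((i.+1)%:R * hitg ps z i (nxt z s b)))); last first.
  move=> i _; rewrite /bump /= add1n mulr_sumr; apply: eq_bigr => s _; rewrite mulr_sumr; apply: eq_bigr => b _.
  by rewrite mulrCA.
rewrite exchange_big /=; apply: ler_sum => s _.
rewrite exchange_big /=; apply: ler_sum => b _.
rewrite -mulr_sumr; apply: ler_wpM2l => //.
apply: (le_trans (@hit_T R ps z h0 h1 M _)); exact: hB.
Qed.

Notation o0 := (@ord0 1).
Notation o1 := (@ord_max 1).

Lemma sum_strat (V : nmodType) (F : stratum -> V) :
  \sum_(t : stratum) F t = F (o0, o0) + F (o0, o1) + F (o1, o0) + F (o1, o1).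
Proof.
have -> : \sum_(t : stratum) F t = \sum_(i < 2) \sum_(j < 2) F (i, j).
  by rewrite pair_bigA; apply: eq_bigr => -[i j].
rewrite !big_ord_recl !big_ord0 /= !addr0 addrA.
have -> : lift ord0 ord0 = o1 :> 'I_2 by apply: val_inj.
by [].
Qed.

Lemma strat_cases (s : stratum) :
  [\/ s = (o0, o0), s = (o0, o1), s = (o1, o0) | s = (o1, o1)].
Proof.
case: s => [[[|[|k]] hk] [[|[|l]] hl]] //.
- by apply: Or41; congr pair; apply: val_inj.
- by apply: Or42; congr pair; apply: val_inj.
- by apply: Or43; congr pair; apply: val_inj.
- by apply: Or44; congr pair; apply: val_inj.
Qed.

Lemma ord2_cases (k : 'I_2) : k = o0 \/ k = o1.
Proof. by case: k => [[|[|k]] hk] //; [left|right]; apply: val_inj. Qed.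

Lemma DallE (d : state) : Dall d = d (o0,o0) + d (o0,o1) + d (o1,o0) + d (o1,o1).
Proof. by rewrite /Dall sum_strat. Qed.

Lemma Dm1E (d : state) k : Dm1 d k =
  (if k == o0 then d (o0,o0) + d (o0,o1) else d (o1,o0) + d (o1,o1)).
Proof.
rewrite /Dm1 big_mkcond sum_strat /=.
by case: (ord2_cases k) => ->; rewrite /= ?add0r ?addr0.
Qed.

Lemma Dm2E (d : state) k : Dm2 d k =
  (if k == o0 then d (o0,o0) + d (o1,o0) else d (o0,o1) + d (o1,o1)).
Proof.
rewrite /Dm2 big_mkcond sum_strat /=.
by case: (ord2_cases k) => ->; rewrite /= ?add0r ?addr0.
Qed.

Definition Vf {R : realType} (wo wm1 wm2 ws : R) (d : state) : R :=
  let a := (d (o0,o0))%:~R in let b := (d (o0,o1))%:~R in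
  let c := (d (o1,o0))%:~R in let e := (d (o1,o1))%:~R in
  wo * (a + b + c + e) ^+ 2 + wm1 * ((a + b) ^+ 2 + (c + e) ^+ 2)
  + wm2 * ((a + c) ^+ 2 + (b + e) ^+ 2) + ws * (a ^+ 2 + b ^+ 2 + c ^+ 2 + e ^+ 2).

Definition gf {R : realType} (wo wm1 wm2 ws : R) (d : state) (s : stratum) : R :=
  wo * (Dall d)%:~R + wm1 * (Dm1 d s.1)%:~R + wm2 * (Dm2 d s.2)%:~R + ws * (d s)%:~R.

Lemma Vnext (R : realType) (wo wm1 wm2 ws : R) d s b :
  wo + wm1 + wm2 + ws = 1 ->
  Vf wo wm1 wm2 ws (nxt d s b) = Vf wo wm1 wm2 ws d + 2 * (sgn b)%:~R * gf wo wm1 wm2 ws d s + 1.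
Proof.
move=> hw; have -> : ws = 1 - wo - wm1 - wm2 by lra.
case: (strat_cases s) => ->; rewrite /Vf /gf !nextE DallE Dm1E Dm2E /=;
  case: b; rewrite /sgn /= ?addr0 !rmorphD /=; ring.
Qed.

Lemma imb_diff (R : realType) (wo wm1 wm2 ws : R) d s :
  imb wo wm1 wm2 ws d s 1 - imb wo wm1 wm2 ws d s (-1) = 4 * gf wo wm1 wm2 ws d s.
Proof.
rewrite /imb /gf !rmorphD /= !rmorphN /= !rmorph1; ring.
Qed.

Lemma drift_s (R : realType) (wo wm1 wm2 ws p q : R) (pi : stratum -> R) d s :
  wo + wm1 + wm2 + ws = 1 -> 0 <= pi s -> q < p -> p + q = 1 ->
  \sum_b pstep wo wm1 wm2 ws p q pi d s b * Vf wo wm1 wm2 ws (nxt d s b) <=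
  pi s * (Vf wo wm1 wm2 ws d + 1 - 2 * (p - q) * `|gf wo wm1 wm2 ws d s|).
Proof.
move=> hw hpi hqp hpq.
rewrite big_bool /pstep !Vnext //= /sgn !rmorph1 rmorphN rmorph1 /=.
set G := gf wo wm1 wm2 ws d s; set V := Vf wo wm1 wm2 ws d.
have key : forall x, G * (2 * x - 1) <= - ((p - q) * `|G|) ->
   pi s * x * (V + 2 * 1 * G + 1) + pi s * (1 - x) * (V + 2 * -1 * G + 1) <=
   pi s * (V + 1 - 2 * (p - q) * `|G|).
  move=> x hx.
  have -> : pi s * x * (V + 2 * 1 * G + 1) + pi s * (1 - x) * (V + 2 * -1 * G + 1) =
            pi s * (V + 1 + 2 * (G * (2 * x - 1))) by ring.
  apply: ler_wpM2l => //; lra.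
apply: key.
have hd := @imb_diff R wo wm1 wm2 ws d s; rewrite -/G in hd.
rewrite /prob1.
case: ltP => h1.
  have hG : 0 < G by lra.
  rewrite gtr0_norm //; have -> : p = 1 - q by lra.
  rewrite le_eqVlt; apply/orP; left; apply/eqP; ring.
case: ltP => h2.
  have hG : G < 0 by lra.
  rewrite ltr0_norm //; have -> : p = 1 - q by lra.
  rewrite le_eqVlt; apply/orP; left; apply/eqP; ring.
have hG : G = 0 by lra.
by rewrite hG normr0; lra.
Qed.

Lemma nrmE (R : realType) (d : state) : ((nrm d)%:R : R) =
  `|(d (o0,o0))%:~R| + `|(d (o0,o1))%:~R| + `|(d (o1,o0))%:~R| + `|(d (o1,o1))%:~R|.
Proof. by rewrite /nrm natr_sum sum_strat !natr_absz !intr_norm. Qed.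

Lemma gsum_lb (R : realType) (wo wm1 wm2 ws : R) (d : state) :
  0 <= wo -> 0 <= wm1 -> 0 <= wm2 -> 0 <= ws ->
  ws * (nrm d)%:R <= 4 * \sum_s `|gf wo wm1 wm2 ws d s|.
Proof.
move=> h1 h2 h3 h4.
rewrite nrmE sum_strat /gf !DallE !Dm1E !Dm2E /=.
rewrite !rmorphD /=.
set a : R := (d (o0,o0))%:~R; set b : R := (d (o0,o1))%:~R.
set c : R := (d (o1,o0))%:~R; set e : R := (d (o1,o1))%:~R.
set g1 := wo * (a + b + c + e) + wm1 * (a + b) + wm2 * (a + c) + ws * a.
set g2 := wo * (a + b + c + e) + wm1 * (a + b) + wm2 * (b + e) + ws * b.
set g3 := wo * (a + b + c + e) + wm1 * (c + e) + wm2 * (a + c) + ws * c.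
set g4 := wo * (a + b + c + e) + wm1 * (c + e) + wm2 * (b + e) + ws * e.
set N := `|a| + `|b| + `|c| + `|e|.
set Gs := `|g1| + `|g2| + `|g3| + `|g4|.
have hV : a * g1 + b * g2 + c * g3 + e * g4 =
   wo * (a + b + c + e) ^+ 2 + wm1 * ((a + b) ^+ 2 + (c + e) ^+ 2)
  + wm2 * ((a + c) ^+ 2 + (b + e) ^+ 2) + ws * (a ^+ 2 + b ^+ 2 + c ^+ 2 + e ^+ 2).
  by rewrite /g1 /g2 /g3 /g4; ring.
have hV1 : ws * (a ^+ 2 + b ^+ 2 + c ^+ 2 + e ^+ 2) <= a * g1 + b * g2 + c * g3 + e * g4.
  rewrite hV; have := sqr_ge0 (a + b + c + e); have := sqr_ge0 (a + b);
  have := sqr_ge0 (c + e); have := sqr_ge0 (a + c); have := sqr_ge0 (b + e); nra.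
have hN0 : 0 <= N by rewrite /N; have := normr_ge0 a; have := normr_ge0 b;
  have := normr_ge0 c; have := normr_ge0 e; lra.
have hGs : 0 <= Gs by rewrite /Gs; have := normr_ge0 g1; have := normr_ge0 g2;
  have := normr_ge0 g3; have := normr_ge0 g4; lra.
have hV2 : a * g1 + b * g2 + c * g3 + e * g4 <= N * Gs.
  have t : forall x y : R, x * y <= `|x| * `|y|.
    by move=> x y; rewrite -normrM ler_norm.
  have := t a g1; have := t b g2; have := t c g3; have := t e g4.
  have := normr_ge0 a; have := normr_ge0 b; have := normr_ge0 c; have := normr_ge0 e.
  have := normr_ge0 g1; have := normr_ge0 g2; have := normr_ge0 g3; have := normr_ge0 g4.
  rewrite /N /Gs; nra.
have hsq : N ^+ 2 <= 4 * (a ^+ 2 + b ^+ 2 + c ^+ 2 + e ^+ 2).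
  have nK : forall x : R, `|x| ^+ 2 = x ^+ 2 by move=> x; apply: real_normK; exact: num_real.
  rewrite -(nK a) -(nK b) -(nK c) -(nK e) /N.
  have := sqr_ge0 (`|a| - `|b|); have := sqr_ge0 (`|a| - `|c|); have := sqr_ge0 (`|a| - `|e|);
  have := sqr_ge0 (`|b| - `|c|); have := sqr_ge0 (`|b| - `|e|); have := sqr_ge0 (`|c| - `|e|).
  nra.
have main : ws * N ^+ 2 <= 4 * (N * Gs).
  have : ws * N ^+ 2 <= ws * (4 * (a ^+ 2 + b ^+ 2 + c ^+ 2 + e ^+ 2)) by rewrite ler_wpM2l.
  lra.
have [N0|Npos] := eqVneq N 0.
  rewrite N0 mulr0; lra.
have hNp : 0 < N by rewrite lt_neqAle eq_sym Npos.
rewrite -/N -/Gs.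
have : ws * N * N <= (4 * Gs) * N by move: main; rewrite expr2; lra.
by rewrite ler_pM2r.
Qed.

Lemma Vf_ge0 (R : realType) (wo wm1 wm2 ws : R) d :
  0 <= wo -> 0 <= wm1 -> 0 <= wm2 -> 0 <= ws -> 0 <= Vf wo wm1 wm2 ws d.
Proof.
move=> h1 h2 h3 h4; rewrite /Vf /=.
set a : R := (d (o0,o0))%:~R; set b : R := (d (o0,o1))%:~R.
set c : R := (d (o1,o0))%:~R; set e : R := (d (o1,o1))%:~R.
have := sqr_ge0 (a + b + c + e); have := sqr_ge0 (a + b); have := sqr_ge0 (c + e);
have := sqr_ge0 (a + c); have := sqr_ge0 (b + e); have := sqr_ge0 a; have := sqr_ge0 b;
have := sqr_ge0 c; have := sqr_ge0 e; nra.
Qed.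

Lemma Vf_le (R : realType) (wo wm1 wm2 ws : R) d :
  0 <= wo -> 0 <= wm1 -> 0 <= wm2 -> 0 <= ws -> wo + wm1 + wm2 + ws = 1 ->
  Vf wo wm1 wm2 ws d <= ((nrm d)%:R) ^+ 2.
Proof.
move=> h1 h2 h3 h4 hw; rewrite nrmE /Vf /=.
set a : R := (d (o0,o0))%:~R; set b : R := (d (o0,o1))%:~R.
set c : R := (d (o1,o0))%:~R; set e : R := (d (o1,o1))%:~R.
set N := `|a| + `|b| + `|c| + `|e|.
have nK : forall x : R, x ^+ 2 = `|x| ^+ 2 by move=> x; rewrite real_normK // num_real.
have na := normr_ge0 a; have nb := normr_ge0 b; have nc := normr_ge0 c; have ne := normr_ge0 e.
have sq : forall x y : R, 0 <= y -> `|x| <= y -> x ^+ 2 <= y ^+ 2.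
  move=> x y hy hxy; rewrite nK; have := normr_ge0 x; nra.
have t2 : forall x y : R, `|x + y| <= `|x| + `|y| by move=> x y; exact: ler_normD.
have B1 : (a + b + c + e) ^+ 2 <= N ^+ 2.
  apply: sq; first by rewrite /N; lra.
  have := t2 (a + b + c) e; have := t2 (a + b) c; have := t2 a b; rewrite /N; lra.
have B2 : (a + b) ^+ 2 + (c + e) ^+ 2 <= N ^+ 2.
  have := sq (a + b) (`|a| + `|b|) (addr_ge0 na nb) (t2 a b).
  have := sq (c + e) (`|c| + `|e|) (addr_ge0 nc ne) (t2 c e).
  rewrite /N; nra.
have B3 : (a + c) ^+ 2 + (b + e) ^+ 2 <= N ^+ 2.
  have := sq (a + c) (`|a| + `|c|) (addr_ge0 na nc) (t2 a c).
  have := sq (b + e) (`|b| + `|e|) (addr_ge0 nb ne) (t2 b e).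
  rewrite /N; nra.
have B4 : a ^+ 2 + b ^+ 2 + c ^+ 2 + e ^+ 2 <= N ^+ 2.
  rewrite (nK a) (nK b) (nK c) (nK e) /N; nra.
have C1 := ler_wpM2l h1 B1; have C2 := ler_wpM2l h2 B2.
have C3 := ler_wpM2l h3 B3; have C4 := ler_wpM2l h4 B4.
have : (wo + wm1 + wm2 + ws) * N ^+ 2 = N ^+ 2 by rewrite hw mul1r.
lra.
Qed.

Lemma prob1_bnd (R : realType) (wo wm1 wm2 ws p q : R) d s :
  q < p -> p + q = 1 -> q <= prob1 wo wm1 wm2 ws p q d s <= p.
Proof.
move=> hqp hpq; rewrite /prob1.
case: ltP => _; first by apply/andP; split; lra.
case: ltP => _; apply/andP; split; lra.
Qed.

Lemma PS0_pstep (R : realType) (wo wm1 wm2 ws p q : R) (pi : stratum -> R) :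
  0 < q -> q < p -> p + q = 1 -> (forall s, 0 < pi s) -> PS0 (pstep wo wm1 wm2 ws p q pi).
Proof.
move=> hq hqp hpq hpi d s b; rewrite /pstep; apply: mulr_ge0; first exact: ltW.
have /andP[l u] := @prob1_bnd R wo wm1 wm2 ws p q d s hqp hpq.
case: b; lra.
Qed.

Lemma PS1_pstep (R : realType) (wo wm1 wm2 ws p q : R) (pi : stratum -> R) :
  \sum_s pi s = 1 -> PS1 (pstep wo wm1 wm2 ws p q pi).
Proof.
move=> h d; rewrite -h; apply: eq_bigr => s _; rewrite big_bool /pstep /=; ring.
Qed.

Lemma pstep_lb (R : realType) (wo wm1 wm2 ws p q : R) (pi : stratum -> R) (cm : R) :
  0 < q -> q < p -> p + q = 1 -> (forall s, cm <= pi s) -> 0 <= cm ->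
  forall d s b, cm * q <= pstep wo wm1 wm2 ws p q pi d s b.
Proof.
move=> hq hqp hpq hcm hcm0 d s b; rewrite /pstep.
have /andP[l u] := @prob1_bnd R wo wm1 wm2 ws p q d s hqp hpq.
apply: ler_pM => //; first exact: ltW.
case: b; lra.
Qed.

Lemma drift_all (R : realType) (wo wm1 wm2 ws p q : R) (pi : stratum -> R) (cm : R) (Rn : nat) :
  0 <= wo -> 0 <= wm1 -> 0 <= wm2 -> 0 <= ws -> wo + wm1 + wm2 + ws = 1 ->
  q < p -> p + q = 1 -> (forall s, cm <= pi s) -> 0 <= cm -> \sum_s pi s = 1 ->
  4 <= (p - q) * cm * ws * Rn%:R ->
  forall d, (Rn <= nrm d)%N ->
  \sum_s \sum_b pstep wo wm1 wm2 ws p q pi d s b * Vf wo wm1 wm2 ws (nxt d s b)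
    <= Vf wo wm1 wm2 ws d - 1.
Proof.
move=> h1 h2 h3 h4 hw hqp hpq hcm hcm0 hpi hR d hd.
have hpi0 : forall s, 0 <= pi s by move=> s; exact: le_trans hcm0 (hcm s).
set V := Vf wo wm1 wm2 ws d.
set G := fun s => `|gf wo wm1 wm2 ws d s|.
have e1 : \sum_s \sum_b pstep wo wm1 wm2 ws p q pi d s b * Vf wo wm1 wm2 ws (nxt d s b)
   <= \sum_s pi s * (V + 1 - 2 * (p - q) * G s).
  by apply: ler_sum => s _; apply: drift_s.
have e2 : \sum_s pi s * (V + 1 - 2 * (p - q) * G s) =
          (V + 1) - 2 * (p - q) * \sum_s pi s * G s.
  rewrite (eq_bigr (fun s => pi s * (V + 1) - 2 * (p - q) * (pi s * G s))); last first.
    by move=> s _; ring.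
  by rewrite sumrB -mulr_suml hpi mul1r -mulr_sumr.
have e3 : cm * \sum_s G s <= \sum_s pi s * G s.
  rewrite mulr_sumr; apply: ler_sum => s _; apply: ler_wpM2r => //; exact: normr_ge0.
have e4 := @gsum_lb R wo wm1 wm2 ws d h1 h2 h3 h4.
have e5 : (Rn%:R : R) <= (nrm d)%:R by rewrite ler_nat.
have hpq0 : 0 <= p - q by lra.
have e6 : (p - q) * cm * ws * Rn%:R <= (p - q) * cm * (ws * (nrm d)%:R).
  rewrite -mulrA; apply: ler_wpM2l; first exact: mulr_ge0.
  exact: ler_wpM2l.
have e7 : (p - q) * cm * (ws * (nrm d)%:R) <= (p - q) * cm * (4 * \sum_s G s).
  by apply: ler_wpM2l => //; exact: mulr_ge0.
have e8 : (p - q) * (cm * \sum_s G s) <= (p - q) * \sum_s pi s * G s.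
  exact: ler_wpM2l.
have : 1 <= (p - q) * \sum_s pi s * G s.
  move: e6 e7 e8; rewrite !mulrA; lra.
rewrite -mulrA in e2 *; lra.
Qed.

Lemma hitE (R : realType) (wo wm1 wm2 ws p q : R) (pi : stratum -> R) z :
  forall n d, hit wo wm1 wm2 ws p q pi z n d = hitg (pstep wo wm1 wm2 ws p q pi) z n d.
Proof.
elim=> [|n IH] d //=; case: (d == z) => //.
apply: eq_bigr => s _; apply: eq_bigr => b _; by rewrite IH.
Qed.

Lemma firstretE (R : realType) (wo wm1 wm2 ws p q : R) (pi : stratum -> R) z :
  firstret wo wm1 wm2 ws p q pi z = firstretg (pstep wo wm1 wm2 ws p q pi) z.
Proof.
apply/funext => -[|n] //=.
apply: eq_bigr => s _; apply: eq_bigr => b _; by rewrite hitE.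
Qed.

Lemma nstepE (R : realType) (wo wm1 wm2 ws p q : R) (pi : stratum -> R) :
  forall n x y, nstep wo wm1 wm2 ws p q pi n x y = nstepg (pstep wo wm1 wm2 ws p q pi) n x y.
Proof.
elim=> [|n IH] x y //=.
apply: eq_bigr => s _; apply: eq_bigr => b _; by rewrite IH.
Qed.

Lemma dst_next1 (z : state) s : dst (nxt z s true) z = 1%N.
Proof.
rewrite /dst (bigD1 s) //= nextE eqxx /sgn addrAC subrr add0r big1 //.
by move=> t /negbTE ts; rewrite nextE ts addr0 subrr.
Qed.
Lemma cbound_lt (R : realType) (b m : R) : 0 <= b -> 0 <= m ->
  (m < Cbound b) <-> (4* (b+m)^+2 + 2* (b+m)* (1-b) - (1+b)^+2 < 0).
Proof.
move=> hb hm; rewrite /Cbound.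
set S := (1 - b) ^+ 2 + 4 * (1 + b) ^+ 2.
have hS : 0 < S by rewrite /S; nra.
have hx : 0 <= 4* m+1+3* b by lra.
have -> : (m < (Num.sqrt S - 1 - 3 * b) / 4) = (4* m+1+3* b < Num.sqrt S).
  apply/idP/idP => h; lra.
rewrite -{1}(ger0_norm hx) -sqrtr_sqr ltr_sqrt //.
split => h; rewrite /S in h *; nra.
Qed.

Lemma part1 (R : realType) (b m x1 x2 x3 : R) : 0 <= b -> 0 <= m -> b + 2* m <= 1 ->
  x1 + (b+m) * x2 + (b+m) * x3 = b ->
  (b+m) * x1 + x2 + b * x3 = b+m ->
  (b+m) * x1 + b * x2 + x3 = b+m ->
  (`|x1| + `|x2| + `|x3| < 1 <-> 4* (b+m)^+2 + 2* (b+m)* (1-b) - (1+b)^+2 < 0).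
Proof.
move=> hb hm hs e1 e2 e3.
set a := b + m in e1 e2 e3 *.
have ha : 0 <= a by rewrite /a; lra.
have ha2 : 2 * a <= 1 + b by rewrite /a; lra.
have [b1|b1] := eqVneq b 1.
  have m0 : m = 0 by lra.
  have a1 : a = 1 by rewrite /a; lra.
  rewrite a1 b1 in e1 *.
  split => h; last by exfalso; lra.
  exfalso.
  have : 1 <= `|x1| + `|x2| + `|x3|.
    have := ler_norm x1; have := ler_norm x2; have := ler_norm x3. lra.
  lra.
have bl : b < 1 by rewrite lt_neqAle b1 /=; lra.
have x23 : x2 = x3.
  have : (1 - b) * (x2 - x3) = 0 by lra.
  move/eqP; rewrite mulf_eq0 => /orP[]/eqP; lra.
rewrite -x23 in e1 e2 *.
set D := 1 + b - 2 * a^+2.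
have hD : 0 < D by rewrite /D; nra.
have ex2 : x2 * D = a * (1 - b) by rewrite /D; nra.
have ex1 : x1 * D = b + b^+2 - 2 * a^+2 by rewrite /D; nra.
have hx2 : 0 <= x2.
  have : 0 <= x2 * D by rewrite ex2; nra.
  rewrite pmulr_lge0 //.
rewrite (ger0_norm hx2).
have [h1|h1] := lerP 0 x1.
  rewrite (ger0_norm h1).
  have hb2 : 2 * a^+2 <= b + b^+2.
    have : 0 <= x1 * D by nra.
    rewrite ex1; lra.
  split => h.
  - have : (x1 + 2 * x2) * D < 1 * D by rewrite ltr_pM2r //; lra.
    have -> : (x1 + 2 * x2) * D = x1 * D + 2 * (x2 * D) by ring.
    rewrite ex1 ex2 mul1r => h2.
    have h3 : 2 * a < 1 + b.
      have : 0 < (1-b) * (1 + b - 2* a) by rewrite /D in h2; nra.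
      rewrite pmulr_rgt0; lra.
    nra.
  - have h3 : 2 * a < 1 + b.
      rewrite ltNge; apply/negP => hc.
      have : (1 + b)^+2 <= (2 * a)^+2 by rewrite ler_pXn2r // ?nnegrE; lra.
      nra.
    have : (x1 + 2 * x2) * D < D.
      have -> : (x1 + 2 * x2) * D = x1 * D + 2 * (x2 * D) by ring.
      rewrite ex1 ex2 /D; nra.
    move=> h4. have : x1 + 2* x2 < 1.
      by rewrite -(ltr_pM2r hD) mul1r.
    lra.
rewrite (ltr0_norm h1).
have e : (- x1 + 2 * x2) * D = 2* a^+2 - b - b^+2 + 2* a* (1-b).
  have -> : (- x1 + 2 * x2) * D = - (x1 * D) + 2 * (x2 * D) by ring.
  by rewrite ex1 ex2; ring.
split => h.
- have : (- x1 + 2 * x2) * D < 1 * D by rewrite ltr_pM2r //; lra.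
  rewrite e mul1r /D; lra.
- have : (- x1 + 2 * x2) * D < 1 * D by rewrite e mul1r /D; lra.
  rewrite ltr_pM2r //; lra.
Qed.

Theorem corollary1 (R : realType) (wo wm1 wm2 ws : R) :
  0 <= wo -> 0 <= wm1 -> 0 <= wm2 -> 0 <= ws ->
  wo + wm1 + wm2 + ws = 1 ->
  wm1 = wm2 ->
  (forall x1 x2 x3 : R,
     let u1 := 1 in let u2 := wo + wm1 in let u3 := wo + wm2 in let u4 := wo in
     u1 * x1 + u2 * x2 + u3 * x3 = u4 ->
     u2 * x1 + u1 * x2 + u4 * x3 = u3 ->
     u3 * x1 + u4 * x2 + u1 * x3 = u2 ->
     (`|x1| + `|x2| + `|x3| < 1 <-> wm1 < Cbound wo))
  /\
  (forall (p q : R) (pi : stratum -> R),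
     0 < q -> q < p -> p < 1 -> p + q = 1 ->
     (forall s, 0 < pi s) -> \sum_(s : stratum) pi s = 1 ->
     0 < ws -> wm1 < Cbound wo ->
     pos_rec_chain_period wo wm1 wm2 ws p q pi 2).
Proof.
move=> hwo hwm1 hwm2 hws hsum hm.
split.
  move=> x1 x2 x3 u1 u2 u3 u4 e1 e2 e3.
  rewrite /u1 /u2 /u3 /u4 -hm !mul1r in e1 e2 e3.
  have H1 := @part1 R wo wm1 x1 x2 x3 hwo hwm1 ltac:(lra) e1 e2 e3.
  have H2 := @cbound_lt R wo wm1 hwo hwm1.
  split => h; [apply/H2/H1 | apply/H1/H2]; exact: h.
move=> p q pi hq hqp hp1 hpq hpi hpis hws0 _.
set ps := pstep wo wm1 wm2 ws p q pi.
have h0 : PS0 ps by apply: PS0_pstep.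
have h1 : PS1 ps by apply: PS1_pstep.
set cm := Num.min (Num.min (pi (o0,o0)) (pi (o0,o1))) (Num.min (pi (o1,o0)) (pi (o1,o1))).
have hcm : forall s, cm <= pi s.
  by move=> s; case: (strat_cases s) => ->; rewrite /cm !ge_min lexx ?orbT.
have hcm0 : 0 < cm by rewrite /cm !lt_min !hpi.
set c := cm * q.
have hc : 0 < c by rewrite /c mulr_gt0.
have hC : forall d s b, c <= ps d s b.
  by apply: pstep_lb => //; exact: ltW.
set K := (p - q) * cm * ws.
have hK : 0 < K by rewrite /K !mulr_gt0 // subr_gt0.
set Rn := (Num.truncn (4 / K)).+1.
have hR : 4 <= (p - q) * cm * ws * Rn%:R.
  have t := truncnS_gt (4 / K); rewrite -/Rn in t.
  have e : 4 / K * K = 4 by rewrite divfK // gt_eqF.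
  rewrite -/K; nra.
have V0 : forall x, 0 <= Vf wo wm1 wm2 ws x by move=> x; exact: Vf_ge0.
have Vl : forall x, Vf wo wm1 wm2 ws x <= ((nrm x)%:R) ^+ 2 by move=> x; exact: Vf_le.
have Dr := @drift_all R wo wm1 wm2 ws p q pi cm Rn hwo hwm1 hwm2 hws hsum hqp hpq hcm (ltW hcm0) hpis hR.
split; [|split].
- move=> x y; exists (dst x y); rewrite nstepE.
  apply: lt_le_trans (@nstep_dist R ps c h0 (ltW hc) hC (dst x y) x y erefl).
  exact: exprn_gt0.
- move=> z; rewrite /pos_recurrent firstretE.
  have [A hA] := @U_bound R ps z c (Vf wo wm1 wm2 ws) Rn h0 h1 hc hC V0 Vl Dr.
  exact: (@pr_gen R ps z (fun d => Vf wo wm1 wm2 ws d + A) h0 h1 hA).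
- move=> z; split.
    move=> n hn; rewrite nstepE => /(@nstep_parity R ps h0) [k].
    rewrite subrr add0r => hk; lia.
  move=> k' hk'; apply: hk' => //; rewrite nstepE.
  have -> : nstepg ps 2 z z = \sum_s \sum_b ps z s b * nstepg ps 1 (nxt z s b) z by [].
  have lb := @nstep_dist R ps c h0 (ltW hc) hC 1 (nxt z (o0,o0) true) z (dst_next1 _ _).
  have hs := @single_le R (fun s b => ps z s b * nstepg ps 1 (nxt z s b) z) (o0,o0) true.
  have : 0 < ps z (o0,o0) true * nstepg ps 1 (nxt z (o0,o0) true) z.
    apply: mulr_gt0; first exact: lt_le_trans hc (hC _ _ _).
    by apply: lt_le_trans lb; exact: exprn_gt0.
  move=> hpos; apply: lt_le_trans hpos _; apply: hs => s b.
  apply: mulr_ge0 => //; exact: nstep_ge0.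
Qed.
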